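(* Let $R>0$ and $p>0$. Let $\mathcal G$ be a hypergraph, $U$ a set, and $\pi:V(\mathcal G)\to U$ a function with $|\pi(E)|=|E|$ for every $E\in\mathcal G$. Then for every $\vartheta:\pi(\mathcal G)\to\mathbb R_{\ge0}$, $$\Lambda_p(\vartheta\mathbin{\hat\circ}\pi)\le\Lambda_p(\vartheta).$$
   Context: A hypergraph is identified with its edge set; $\pi(\mathcal G)=\{\pi(E):E\in\mathcal G\}$ with vertex set $\pi(V(\mathcal G))$. For a measure $\nu$ on a hypergraph $\mathcal K$: $d_\nu(L)=\sum_{E\in\mathcal K,L\subset E}\nu(E)$ and $\Lambda_p(\nu)=\sum_{L\subset V(\mathcal K),|L|\ge2}d_\nu(L)^2p^{-|L|}$. The pullback $\vartheta\mathbin{\hat\circ}\pi:\mathcal G\to\mathbb R_{\ge0}$ is $\vartheta\mathbin{\hat\circ}\pi(E)=\vartheta(\pi(E))/|\{E_0\in\mathcal G:\pi(E_0)=\pi(E)\}|$. *)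

(* Defs.v *)
From HB Require Import structures.
From mathcomp Require Import all_boot all_order all_algebra.
Set Implicit Arguments. Unset Strict Implicit. Unset Printing Implicit Defensive.
Import Order.TTheory GRing.Theory Num.Theory.
Local Open Scope ring_scope.

(* A hypergraph on a finite vertex type T: a vertex set VK : {set T} together
   with an edge set K : {set {set T}} (edges are subsets of VK).
   A measure on K is a function nu : {set T} -> R (only values on K matter). *)

Definition hdeg (R : realFieldType) (T : finType) (K : {set {set T}})
  (nu : {set T} -> R) (L : {set T}) : R :=
  \sum_(E in K | L \subset E) nu E.

Definition Lambda (R : realFieldType) (T : finType) (p : R) (VK : {set T})
  (K : {set {set T}}) (nu : {set T} -> R) : R :=
  \sum_(L : {set T} | (L \subset VK) && (2 <= #|L|)%N) (hdeg K nu L) ^+ 2 * p ^- #|L|.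

Definition himage (V U : finType) (pi : V -> U) (G : {set {set V}}) : {set {set U}} :=
  [set pi @: E | E : {set V} in G].

Definition pullback (R : realFieldType) (V U : finType) (G : {set {set V}})
  (pi : V -> U) (theta : {set U} -> R) (E : {set V}) : R :=
  theta (pi @: E) / (#|[set E0 in G | pi @: E0 == pi @: E]|)%:R.

(* Main.v *)
Require Import Defs.
From HB Require Import structures.
From mathcomp Require Import all_boot all_order all_algebra.
From mathcomp Require Import lra.
Import Order.TTheory GRing.Theory Num.Theory.
Local Open Scope ring_scope.

Lemma sumsq_le (R : realFieldType) (I : Type) (r : seq I) (P : pred I) (F : I -> R) :
  (forall i, P i -> 0 <= F i) ->
  \sum_(i <- r | P i) F i ^+ 2 <= (\sum_(i <- r | P i) F i) ^+ 2.
Proof.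
move=> F0.
suff [] : 0 <= \sum_(i <- r | P i) F i /\
  \sum_(i <- r | P i) F i ^+ 2 <= (\sum_(i <- r | P i) F i) ^+ 2 by [].
apply: (big_rec2 (fun x y => 0 <= y /\ x <= y ^+ 2)); first by rewrite expr0n /=.
move=> i y1 y2 Pi [y20 hy]; have := F0 i Pi => Fi; split; first exact: addr_ge0.
rewrite sqrrD; have : 0 <= F i * y2 *+ 2 by rewrite mulrn_wge0 // mulr_ge0.
move: hy; set a := F i ^+ 2; set b := F i * y2 *+ 2; set c := y2 ^+ 2. 
move=> hy hb; lra.
Qed.

Theorem lemmaC2 (R : realFieldType) (Rad p : R) (hRad : 0 < Rad) (hp : 0 < p)
  (V U : finType) (VG : {set V}) (G : {set {set V}})
  (hG : forall E, E \in G -> E \subset VG)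
  (pi : V -> U)
  (hinj : forall E, E \in G -> #|pi @: E| = #|E|)
  (theta : {set U} -> R)
  (htheta : forall F, F \in himage pi G -> 0 <= theta F) :
  Lambda p VG G (pullback G pi theta) <= Lambda p (pi @: VG) (himage pi G) theta.
Proof.
have injE : forall E, E \in G -> {in E &, injective pi}.
  by move=> E hE; apply/imset_injP; rewrite hinj.
set nu := pullback G pi theta.
have nu0 : forall E, E \in G -> 0 <= nu E.
  move=> E hE; rewrite /nu /pullback divr_ge0 ?ler0n // htheta //.
  by apply/imsetP; exists E.
have hdeg0 : forall L, 0 <= hdeg G nu L.
  by move=> L; rewrite /hdeg sumr_ge0 // => E /andP[hE _]; apply: nu0.
set ex := fun L : {set V} => [exists E in G, L \subset E].
rewrite /Lambda.
have -> : \sum_(L : {set V} | (L \subset VG) && (2 <= #|L|)%N)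
    hdeg G nu L ^+ 2 * p ^- #|L| =
  \sum_(L : {set V} | ((L \subset VG) && (2 <= #|L|)%N) && ex L)
    hdeg G nu L ^+ 2 * p ^- #|L|.
  rewrite [RHS]big_mkcondr; apply: eq_bigr => L _; case exL: (ex L) => //.
  rewrite /hdeg big1 ?expr0n ?mul0r // => E /andP[hE hLE].
  by move/negbT: exL; rewrite /ex => /existsPn /(_ E); rewrite hE hLE.
rewrite (partition_big (P := fun L : {set V} => ((L \subset VG) && (2 <= #|L|)%N) && ex L) (fun L => pi @: L)
  (fun M => (M \subset pi @: VG) && (2 <= #|M|)%N)); last first.
  move=> L /andP[/andP[hLV h2] /existsP[E /andP[hE hLE]]].
  rewrite imsetS //= card_in_imset //.
  by move=> x y xL yL; apply: (injE E hE); apply: (subsetP hLE).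
apply: (ler_sum (I := {set U})) => M /andP[hMV hM2].
have injL : forall L, ex L -> {in L &, injective pi}.
  move=> L /existsP[E /andP[hE hLE]] x y xL yL.
  by apply: (injE E hE); apply: (subsetP hLE).
rewrite (eq_bigr (fun L => hdeg G nu L ^+ 2 / p ^+ #|M|)); last first.
  move=> L /andP[/andP[/andP[_ _] exL] /eqP <-].
  by rewrite card_in_imset //; apply: injL.
rewrite -mulr_suml ler_pM2r ?invr_gt0 ?exprn_gt0 //.
apply: (le_trans (@sumsq_le _ _ _ _ (hdeg G nu) _)); first by move=> L _; apply: hdeg0.
rewrite le_eqVlt; apply/orP; left; apply/eqP; congr (_ ^+ 2).
rewrite /hdeg (exchange_big_dep (fun E : {set V} => E \in G)) /=; last by move=> L E _ /andP[].
rewrite (eq_bigr (fun E : {set V} => if M \subset pi @: E then nu E else 0)); last first.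
  move=> E hE; case: ifP => hM.
  - rewrite (big_pred1 (E :&: pi @^-1: M)) // => L /=.
    apply/idP/eqP.
    + move=> /andP[/andP[_ /eqP hLM] /andP[_ hLE]]; apply/setP => x; rewrite !inE.
      apply/idP/andP.
      * move=> xL; split; first exact: (subsetP hLE x xL).
        by rewrite -hLM; apply: imset_f.
      * move=> [xE]; rewrite -hLM => /imsetP[y yL hxy].
        by rewrite (injE E hE x y xE (subsetP hLE y yL) hxy).
    + move=> ->.
      have sub : E :&: pi @^-1: M \subset E by rewrite subsetIl.
      have im : pi @: (E :&: pi @^-1: M) = M.
        apply/eqP; rewrite eqEsubset; apply/andP; split.
          by apply/subsetP => u /imsetP[x]; rewrite !inE => /andP[_ xM] ->.
        apply/subsetP => u uM; have /imsetP[x xE ux] := subsetP hM u uM.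
        by rewrite ux; apply: imset_f; rewrite !inE xE -ux.
      have exL : ex (E :&: pi @^-1: M) by apply/existsP; exists E; rewrite hE sub.
      rewrite hE sub im eqxx (subset_trans sub (hG E hE)) exL /= andbT.
      by rewrite !andbT -(card_in_imset (injL _ exL)) im.
  - rewrite big_pred0 // => L; apply/negbTE/negP.
    move=> /andP[/andP[_ /eqP hLM] /andP[_ hLE]].
    by move/negbT: hM; rewrite -hLM imsetS.
rewrite -big_mkcondr.
rewrite (partition_big (P := fun E : {set V} => (E \in G) && (M \subset pi @: E))
  (fun E => pi @: E) (fun F => (F \in himage pi G) && (M \subset F))); last first.
  by move=> E /andP[hE hM]; rewrite hM andbT; apply/imsetP; exists E.
apply: eq_bigr => F /andP[hF hMF].
rewrite (eq_bigl (fun E => E \in [set E0 in G | pi @: E0 == F])); last first.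
  move=> E; rewrite inE; case: (eqVneq (pi @: E) F) => [->|_].
    by rewrite hMF !andbT.
  by rewrite !andbF.
rewrite (eq_bigr (fun _ => theta F / (#|[set E0 in G | pi @: E0 == F]|)%:R)); last first.
  by move=> E; rewrite inE => /andP[_ /eqP <-].
rewrite sumr_const -(mulr_natr (theta F / _)) divfK //.
rewrite pnatr_eq0 -lt0n; apply/card_gt0P.
move: hF; rewrite /himage => /imsetP[E0 hE0 hF'].
by exists E0; rewrite inE hE0 hF' eqxx.
Qed.
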